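(* Let $\mathcal{C}$ be a linear code over $R$ of type $(n;k,0,\dots,0)$, let $G$ be a generator matrix of $\mathcal{C}$ with rows $u_1,\dots,u_k$, and let $c\in\mathcal{C}$. If $c=\sum_{i=1}^k\alpha_iu_i$ with $\alpha_i\in R$, then $\nu(c)=\min\{\nu(\alpha_1),\dots,\nu(\alpha_k)\}$.
   Context: Let $R$ be a finite commutative chain ring with maximal ideal $\langle\gamma\rangle$ and nilpotency index $s$ (least $s$ with $\gamma^s=0$). A linear code of length $n$ is an $R$-submodule of $R^n$; it has type $(n;k,0,\dots,0)$ when it is a free $R$-module of rank $k$ (more generally type $(n;t_1,\dots,t_s)$ means isomorphic to $\bigoplus_{i=1}^s(R/\langle\gamma^{s-i+1}\rangle)^{t_i}$). Valuation: for $x\in R\setminus\{0\}$, $\nu(x)$ is the largest $m\in\{0,\dots,s-1\}$ with $x=\gamma^m\beta$ for a unit $\beta$; $\nu(0)=\infty$ (larger than every integer). For $x=(x_1,\dots,x_n)\in R^n$, $\nu(x)=\min_i\nu(x_i)$. *)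

(* Defs.v *)
From HB Require Import structures.
From mathcomp Require Import all_boot all_order all_algebra.
Set Implicit Arguments. Unset Strict Implicit. Unset Printing Implicit Defensive.
Import GRing.Theory.
Local Open Scope ring_scope.

(* Extended naturals N u {oo}: [None] stands for infinity (larger than every
   integer).  [omin] is the minimum on this set. *)
Definition omin (a b : option nat) : option nat :=
  match a, b with
  | None, y => y
  | x, None => x
  | Some m, Some n => Some (minn m n)
  end.

(* Chain ring hypotheses: R finite commutative, the non-units are exactly the
   ideal <gamma> (so <gamma> is the unique maximal ideal), and s is the
   nilpotency index of gamma. *)
Definition chain_ring (R : finComUnitRingType) (gamma : R) (s : nat) : Prop :=
  [/\ forall x : R, x \notin GRing.unit <-> exists y, x = gamma * y,
      gamma ^+ s = 0 &
      forall m, (m < s)%N -> gamma ^+ m != 0].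

Definition nu (R : finComUnitRingType) (gamma : R) (s : nat) (x : R)
  : option nat :=
  if x == 0 then None
  else Some (\max_(m < s | [exists b : R, (b \is a GRing.unit)
                                         && (x == gamma ^+ m * b)]) (m : nat)).

Definition nuv (R : finComUnitRingType) (gamma : R) (s n : nat)
  (x : 'rV[R]_n) : option nat :=
  \big[omin/None]_(i < n) nu gamma s (x 0 i).

(* C (a subset of R^n) is an R-module isomorphic to R^k, i.e. a linear code of
   type (n; k, 0, ..., 0): the image of an injective R-linear map R^k -> R^n. *)
Definition free_code_of_rank (R : finComUnitRingType) (n k : nat)
  (C : {pred 'rV[R]_n}) : Prop :=
  exists f : {linear 'rV[R]_k -> 'rV[R]_n},
    injective f /\ forall x, x \in C <-> exists a, x = f a.

Definition generator_matrix (R : finComUnitRingType) (n k : nat)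
  (C : {pred 'rV[R]_n}) (G : 'M[R]_(k, n)) : Prop :=
  forall x, x \in C <-> exists a : 'I_k -> R, x = \sum_(i < k) a i *: row i G.

(* Main.v *)
Require Import Defs.
From HB Require Import structures.
From mathcomp Require Import all_boot all_order all_algebra.
Import GRing.Theory.
Local Open Scope ring_scope.

Definition le_o (m : nat) (o : option nat) : bool :=
  if o is Some v then (m <= v)%N else true.

Lemma le_o_omin m a b : le_o m (omin a b) = le_o m a && le_o m b.
Proof. by case: a => [a|]; case: b => [b|] //=; rewrite ?andbT // leq_min. Qed.

Lemma le_o_big m k (F : 'I_k -> option nat) :
  le_o m (\big[omin/None]_(i < k) F i) = [forall i, le_o m (F i)].
Proof.
rewrite (big_morph (le_o m) (le_o_omin m) (erefl : le_o m None = true)).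
by rewrite big_andE.
Qed.

Lemma le_o_inj a b : (forall m, le_o m a = le_o m b) -> a = b.
Proof.
case: a => [a|]; case: b => [b|] // H.
- have := H a; have := H b => /=; rewrite !leqnn => h1 h2.
  by congr Some; apply/eqP; rewrite eqn_leq h1 -h2.
- by have := H a.+1; rewrite /= ltnn.
- by have := H b.+1; rewrite /= ltnn.
Qed.

Lemma cr_s_pos (R : finComUnitRingType) (gamma : R) s :
  chain_ring gamma s -> (0 < s)%N.
Proof.
case=> _ H2 _; case: s H2 => // ; rewrite expr0 => /eqP.
by rewrite oner_eq0.
Qed.

Lemma unit_mul0 (R : finComUnitRingType) (x w : R) :
  w \is a GRing.unit -> x * w = 0 -> x = 0.
Proof.
move=> Hw /(congr1 (fun t => t * w^-1)).
by rewrite -mulrA mulrV // mulr1 mul0r.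
Qed.

Arguments unit_mul0 {R x w}.

Lemma cr_unitD (R : finComUnitRingType) (gamma : R) s
  (H : chain_ring gamma s) u y :
  u \is a GRing.unit -> u + gamma * y \is a GRing.unit.
Proof.
case: H => H1 _ _ Hu; apply/negPn/negP => /H1 [z hz].
have : u \notin GRing.unit by apply/H1; exists (z - y); rewrite mulrBr -hz addrK.
by rewrite Hu.
Qed.

Arguments cr_unitD {R gamma s}.

Lemma cr_val_le (R : finComUnitRingType) (gamma : R) s
  (H : chain_ring gamma s) m m' u y :
  (m < s)%N -> u \is a GRing.unit -> gamma ^+ m * u = gamma ^+ m' * y ->
  (m' <= m)%N.
Proof.
case: (H) => _ _ H3 ltms Hu E; rewrite leqNgt; apply/negP => ltmm'.
have Hu' := cr_unitD H u (- (gamma ^+ (m' - m).-1 * y)) Hu.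
have : gamma ^+ m * (u + gamma * - (gamma ^+ (m' - m).-1 * y)) = 0.
  rewrite mulrDr E mulrN mulrN (mulrA gamma) -exprS prednK ?subn_gt0 //.
  by rewrite mulrA -exprD (subnKC (ltnW ltmm')) subrr.
move=> h; move: (unit_mul0 Hu' h) => /eqP; apply/negP; exact: H3.
Qed.

Arguments cr_val_le {R gamma s} H {m m' u y}.

Lemma cr_canc (R : finComUnitRingType) (gamma : R) s
  (H : chain_ring gamma s) m w y :
  (m < s)%N -> gamma ^+ m * w = gamma ^+ m.+1 * y -> exists z, w = gamma * z.
Proof.
case: (H) => H1 _ H3 ltms E.
case: (boolP (w - gamma * y \is a GRing.unit)) => Hw.
- have : gamma ^+ m * (w - gamma * y) = 0.
    by rewrite mulrBr E mulrA -exprSr subrr.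
  move=> h; move: (unit_mul0 Hw h) => /eqP; move: (H3 _ ltms) => /negP //.
- have [z hz] := (proj1 (H1 _)) Hw.
  by exists (z + y); rewrite mulrDr -hz subrK.
Qed.

Arguments cr_canc {R gamma s} H {m w y}.

Lemma cr_decomp (R : finComUnitRingType) (gamma : R) s
  (H : chain_ring gamma s) (x : R) :
  x != 0 -> exists m u, [/\ (m < s)%N, u \is a GRing.unit & x = gamma ^+ m * u].
Proof.
case: (H) => H1 H2 H3 hx.
have claim : forall j, (j <= s)%N ->
  (exists m u, [/\ (m < s)%N, u \is a GRing.unit & x = gamma ^+ m * u])
  \/ exists y, x = gamma ^+ j * y.
  elim=> [|j IH] hj.
  - by right; exists x; rewrite expr0 mul1r.
  case: (IH (ltnW hj)) => [//|[y hy]]; first by left.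
  case: (boolP (y \is a GRing.unit)) => Hy.
  - by left; exists j, y.
  - have [z hz] := (proj1 (H1 _)) Hy.
    by right; exists z; rewrite hy hz mulrA -exprSr.
case: (claim s (leqnn s)) => [//|[y hy]].
by move: hx; rewrite hy H2 mul0r eqxx.
Qed.

Arguments cr_decomp {R gamma s} H {x}.

Lemma cr_nu (R : finComUnitRingType) (gamma : R) s
  (H : chain_ring gamma s) (x u : R) v :
  x != 0 -> (v < s)%N -> u \is a GRing.unit -> x = gamma ^+ v * u ->
  nu gamma s x = Some v.
Proof.
move=> hx ltvs Hu Exu.
rewrite /nu (negbTE hx); congr Some; apply/eqP; rewrite eqn_leq; apply/andP; split.
- apply/bigmax_leqP => i /existsP [b /andP [Hb /eqP E]].
  apply: (cr_val_le H ltvs Hu); by rewrite -Exu E.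
- apply: (leq_bigmax_cond (F := fun i : 'I_s => i : nat) (Ordinal ltvs)).
  by apply/existsP; exists u; rewrite Hu Exu eqxx.
Qed.

Arguments cr_nu {R gamma s} H {x u v}.

Lemma le_o_nu (R : finComUnitRingType) (gamma : R) s
  (H : chain_ring gamma s) (x : R) m :
  le_o m (nu gamma s x) <-> exists y, x = gamma ^+ m * y.
Proof.
case: (eqVneq x 0) => hx.
- by rewrite hx /nu eqxx; split=> // _; exists 0; rewrite mulr0.
have [v [u [ltvs Hu Exu]]] := cr_decomp H hx.
rewrite (cr_nu H hx ltvs Hu Exu) /=; split.
- move=> lemv; exists (gamma ^+ (v - m) * u).
  by rewrite Exu mulrA -exprD subnKC.
- move=> [y hy]; apply: (cr_val_le H ltvs Hu); by rewrite -Exu hy.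
Qed.

Arguments le_o_nu {R gamma s}.

Theorem lemma3p8 (R : finComUnitRingType) (gamma : R) (s n k : nat)
  (C : {pred 'rV[R]_n}) (G : 'M[R]_(k, n)) (c : 'rV[R]_n) (alpha : 'I_k -> R) :
  chain_ring gamma s ->
  free_code_of_rank k C ->
  generator_matrix C G ->
  c \in C ->
  c = \sum_(i < k) alpha i *: row i G ->
  nuv gamma s c = \big[omin/None]_(i < k) nu gamma s (alpha i).
Proof.
move=> H [f [finj fC]] HG cC Ec.
have s_pos := @cr_s_pos _ _ _ H.
case: (H) => H1 H2 H3.
pose phi (a : 'rV[R]_k) := a *m G.
have Cphi : forall x, x \in C <-> exists a, x = phi a.
  move=> x; split=> [/HG [a ->]|[a ->]].
  - exists (\row_i a i); rewrite /phi mulmx_sum_row; apply: eq_bigr => i _.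
    by rewrite mxE.
  - by apply/HG; exists (fun i => a 0 i); rewrite /phi mulmx_sum_row.
have phi_inj : injective phi.
  have E1 : [set x | x \in C] = f @: setT.
    apply/setP => x; rewrite inE; apply/idP/imsetP.
    - by move/fC => [a ->]; exists a.
    - by move=> [a _ ->]; apply/fC; exists a.
  have E2 : [set x | x \in C] = phi @: setT.
    apply/setP => x; rewrite inE; apply/idP/imsetP.
    - by move/Cphi => [a ->]; exists a.
    - by move=> [a _ ->]; apply/Cphi; exists a.
  have : #|phi @: setT| == #|[set: 'rV[R]_k]|.
    by rewrite -E2 E1 card_imset.
  move/imset_injP => Hi x y Exy; apply: Hi => //; by rewrite inE.
have kerG : forall a : 'rV[R]_k, a *m G = 0 -> a = 0.
  by move=> a Ha; apply: phi_inj; rewrite /phi Ha mul0mx.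
pose A := \row_i alpha i.
have EcA : c = A *m G.
  by rewrite Ec mulmx_sum_row; apply: eq_bigr => i _; rewrite mxE.
have key : forall m, (forall j, exists y, c 0 j = gamma ^+ m * y) ->
    forall i, exists y, alpha i = gamma ^+ m * y.
  elim=> [|m IH] Hc.
  - by move=> i; exists (alpha i); rewrite expr0 mul1r.
  have Hc' : forall j, exists y, c 0 j = gamma ^+ m * y.
    move=> j; have [y ->] := Hc j; exists (gamma * y); by rewrite exprSr mulrA.
  have [beta Hb] := fin_all_exists (IH Hc').
  case: (ltnP m s) => hms; last first.
    move=> i; exists 0; rewrite mulr0 Hb -(subnKC hms) exprD H2.
    by rewrite !mul0r.
  pose B := \row_i beta i.
  have EcB : forall j, c 0 j = gamma ^+ m * (B *m G) 0 j.
    move=> j; rewrite EcA !mxE mulr_sumr; apply: eq_bigr => i _.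
    by rewrite !mxE Hb mulrA.
  have HBG : forall j, exists z, (B *m G) 0 j = gamma * z.
    move=> j; have [y hy] := Hc j.
    by apply: (cr_canc H (y := y) hms); rewrite -EcB hy.
  have : (gamma ^+ s.-1 *: B) *m G = 0.
    rewrite -scalemxAl; apply/matrixP => i j; rewrite !mxE [i]ord1.
    have := HBG j; rewrite !mxE => -[z ->].
    by rewrite mulrA -exprSr prednK // H2 mul0r.
  move/kerG => HB0 i.
  have := congr1 (fun M : 'rV[R]_k => M 0 i) HB0; rewrite /= !mxE => Hb0.
  case: (boolP (beta i \is a GRing.unit)) => Hu.
    move: (unit_mul0 Hu Hb0) => /eqP; move: (H3 s.-1); rewrite prednK //.
    by move=> /(_ (leqnn s)) /negP.
  have [w hw] := (proj1 (H1 _)) Hu.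
  by exists w; rewrite Hb hw mulrA -exprSr.
rewrite /nuv; apply: le_o_inj => m; rewrite !le_o_big.
apply/forallP/forallP => Hm i.
- apply/(le_o_nu H); apply: key => j; apply/(le_o_nu H); exact: Hm.
- apply/(le_o_nu H).
  have [y Hy] := fin_all_exists (fun i => proj1 (le_o_nu H (alpha i) m) (Hm i)).
  exists (\sum_l y l * G l i).
  rewrite EcA !mxE mulr_sumr; apply: eq_bigr => l _.
  by rewrite !mxE Hy mulrA.
Qed.
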